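(* Let $\mathbf C$ be a symmetric monoidal restriction category. Then $\mathrm{Aux}(\mathbf C)$, with the restriction structure $\overline{[f,E]}=[\rho^{-1}\circ\overline f,I]$, is a symmetric monoidal restriction category, where the tensor unit and the tensor product of objects are as in $\mathbf C$, the tensor product of $[f,E]\colon A\to B$ and $[f',E']\colon A'\to B'$ is $[\vartheta\circ(f\otimes f'),\,E\otimes E']\colon A\otimes A'\to B\otimes B'$ with $\vartheta\colon(B\otimes E)\otimes(B'\otimes E')\to(B\otimes B')\otimes(E\otimes E')$ the canonical coherence isomorphism of $\mathbf C$, and each coherence isomorphism $\beta$ (associator, unitors, symmetry) of $\mathrm{Aux}(\mathbf C)$ is $[\rho^{-1}\circ\beta,I]$ for the corresponding coherence isomorphism $\beta$ of $\mathbf C$. In particular this tensor product is well defined on $\sim$-classes and satisfies $\overline{[f,E]\otimes[f',E']}=\overline{[f,E]}\otimes\overline{[f',E']}$.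
   Context: A restriction category is a category equipped with an assignment to each morphism $f\colon A\to B$ of an endomorphism $\overline{f}\colon A\to A$ such that (i) $f\circ\overline f=f$; (ii) $\overline f\circ\overline g=\overline g\circ\overline f$ whenever $f,g$ have a common domain; (iii) $\overline{g\circ\overline f}=\overline g\circ\overline f$ whenever $f,g$ have a common domain; (iv) $\overline g\circ f=f\circ\overline{g\circ f}$ whenever $g\circ f$ is defined. A morphism $f$ is total if $\overline f=\mathrm{id}$. A (symmetric) monoidal restriction category is a restriction category with a (symmetric) monoidal structure such that $\overline{f\otimes g}=\overline f\otimes\overline g$. Let $\mathbf C$ be a symmetric monoidal restriction category with tensor unit $I$, associator $\alpha$, left unitor $\lambda$, right unitor $\rho$. For morphisms $f\colon A\to B\otimes E$ and $f'\colon A\to B\otimes E'$ write $f\triangleright f'$ if $\overline f=\overline{f'}$ and there is a morphism $h\colon E\to E'$ with $(\mathrm{id}_B\otimes h)\circ f=f'$. Let $\sim$ be the equivalence relation generated by $\triangleright$ (on morphisms of the form $A\to B\otimes X$ for fixed $A,B$ and varying $X$). The category $\mathrm{Aux}(\mathbf C)$ has the objects of $\mathbf C$; a morphism $A\to B$ is a $\sim$-class $[f,E]$ of a morphism $f\colon A\to B\otimes E$ of $\mathbf C$; the composite of $[f,E]\colon A\to B$ and $[g,E']\colon B\to C$ is $[\alpha\circ(g\otimes\mathrm{id}_E)\circ f,\;E'\otimes E]$; the identity on $A$ is $[\rho_A^{-1},I]$. *)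

(* Defs.v *)
From Stdlib Require Import Relations.

Set Implicit Arguments.
Unset Strict Implicit.

(** Composition [cmp g f] is "g after f". Conventions:
      asc A B C : (A ⊗ B) ⊗ C -> A ⊗ (B ⊗ C)   (associator α), asci its inverse
      lu A : I ⊗ A -> A  (left unitor λ), lui its inverse
      ru A : A ⊗ I -> A  (right unitor ρ), rui its inverse
      sym A B : A ⊗ B -> B ⊗ A  (symmetry). *)
Record smr_data := {
  Ob : Type;
  Hom : Ob -> Ob -> Type;
  cmp : forall A B C, Hom B C -> Hom A B -> Hom A C;
  idm : forall A, Hom A A;
  rst : forall A B, Hom A B -> Hom A A;
  ten : Ob -> Ob -> Ob;
  tenm : forall A B C D, Hom A B -> Hom C D -> Hom (ten A C) (ten B D);
  unt : Ob;
  asc : forall A B C, Hom (ten (ten A B) C) (ten A (ten B C));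
  asci : forall A B C, Hom (ten A (ten B C)) (ten (ten A B) C);
  lu : forall A, Hom (ten unt A) A;
  lui : forall A, Hom A (ten unt A);
  ru : forall A, Hom (ten A unt) A;
  rui : forall A, Hom A (ten A unt);
  sym : forall A B, Hom (ten A B) (ten B A)
}.

Arguments Hom : clear implicits.
Arguments cmp {s A B C} _ _.
Arguments idm {s} A.
Arguments rst {s A B} _.
Arguments ten {s} _ _.
Arguments tenm {s A B C D} _ _.
Arguments unt {s}.
Arguments asc {s} A B C.
Arguments asci {s} A B C.
Arguments lu {s} A.
Arguments lui {s} A.
Arguments ru {s} A.
Arguments rui {s} A.
Arguments sym {s} A B.

(** The axioms of a symmetric monoidal restriction category, stated up to a
    given equality [heq] on each hom-set (a setoid-enriched presentation, so
    that a category whose hom-sets are quotients can be described by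
    representatives). *)
Record is_smrc (D : smr_data) (heq : forall A B, Hom D A B -> Hom D A B -> Prop)
  : Prop := {
  heq_equiv : forall A B, equivalence (Hom D A B) (heq A B);
  cmp_proper : forall A B C (g g' : Hom D B C) (f f' : Hom D A B),
      heq _ _ g g' -> heq _ _ f f' -> heq _ _ (cmp g f) (cmp g' f');
  rst_proper : forall A B (f f' : Hom D A B), heq _ _ f f' -> heq _ _ (rst f) (rst f');
  tenm_proper : forall A B C E (f f' : Hom D A B) (g g' : Hom D C E),
      heq _ _ f f' -> heq _ _ g g' -> heq _ _ (tenm f g) (tenm f' g');
  cmpA : forall A B C E (h : Hom D C E) (g : Hom D B C) (f : Hom D A B),
      heq _ _ (cmp h (cmp g f)) (cmp (cmp h g) f);
  cmp1l : forall A B (f : Hom D A B), heq _ _ (cmp (idm B) f) f;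
  cmp1r : forall A B (f : Hom D A B), heq _ _ (cmp f (idm A)) f;
  R1 : forall A B (f : Hom D A B), heq _ _ (cmp f (rst f)) f;
  R2 : forall A B C (f : Hom D A B) (g : Hom D A C),
      heq _ _ (cmp (rst f) (rst g)) (cmp (rst g) (rst f));
  R3 : forall A B C (f : Hom D A B) (g : Hom D A C),
      heq _ _ (rst (cmp g (rst f))) (cmp (rst g) (rst f));
  R4 : forall A B C (f : Hom D A B) (g : Hom D B C),
      heq _ _ (cmp (rst g) f) (cmp f (rst (cmp g f)));
  tenm_cmp : forall A B C A' B' C' (f : Hom D A B) (g : Hom D B C)
      (f' : Hom D A' B') (g' : Hom D B' C'),
      heq _ _ (tenm (cmp g f) (cmp g' f')) (cmp (tenm g g') (tenm f f'));
  tenm_id : forall A B, heq _ _ (tenm (idm A) (idm B)) (idm (ten A B));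
  asc_iso1 : forall A B C, heq _ _ (cmp (asc A B C) (asci A B C)) (idm _);
  asc_iso2 : forall A B C, heq _ _ (cmp (asci A B C) (asc A B C)) (idm _);
  lu_iso1 : forall A, heq _ _ (cmp (lu A) (lui A)) (idm _);
  lu_iso2 : forall A, heq _ _ (cmp (lui A) (lu A)) (idm _);
  ru_iso1 : forall A, heq _ _ (cmp (ru A) (rui A)) (idm _);
  ru_iso2 : forall A, heq _ _ (cmp (rui A) (ru A)) (idm _);
  sym_inv : forall A B, heq _ _ (cmp (sym B A) (sym A B)) (idm _);
  asc_nat : forall A A' B B' C C' (f : Hom D A A') (g : Hom D B B') (h : Hom D C C'),
      heq _ _ (cmp (asc A' B' C') (tenm (tenm f g) h))
          (cmp (tenm f (tenm g h)) (asc A B C));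
  lu_nat : forall A B (f : Hom D A B),
      heq _ _ (cmp (lu B) (tenm (idm unt) f)) (cmp f (lu A));
  ru_nat : forall A B (f : Hom D A B),
      heq _ _ (cmp (ru B) (tenm f (idm unt))) (cmp f (ru A));
  sym_nat : forall A A' B B' (f : Hom D A A') (g : Hom D B B'),
      heq _ _ (cmp (sym A' B') (tenm f g)) (cmp (tenm g f) (sym A B));
  pentagon : forall A B C E,
      heq _ _ (cmp (asc A B (ten C E)) (asc (ten A B) C E))
          (cmp (tenm (idm A) (asc B C E))
               (cmp (asc A (ten B C) E) (tenm (asc A B C) (idm E))));
  triangle : forall A B,
      heq _ _ (cmp (tenm (idm A) (lu B)) (asc A unt B)) (tenm (ru A) (idm B));
  hexagon : forall A B C,
      heq _ _ (cmp (tenm (idm B) (sym A C)) (cmp (asc B A C) (tenm (sym A B) (idm C))))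
          (cmp (asc B C A) (cmp (sym A (ten B C)) (asc A B C)));
  rst_tenm : forall A B C E (f : Hom D A B) (g : Hom D C E),
      heq _ _ (rst (tenm f g)) (tenm (rst f) (rst g))
}.

Definition SMRC (C : smr_data) : Prop := is_smrc (fun A B => @eq (Hom C A B)).

Section Aux.
Variable C : smr_data.

(** Representatives of morphisms A -> B of Aux(C): pairs (E, f : A -> B ⊗ E). *)
Definition auxHom (A B : Ob C) : Type := { E : Ob C & Hom C A (ten B E) }.

Definition aux_tri (A B : Ob C) (p q : auxHom A B) : Prop :=
  rst (projT2 p) = rst (projT2 q) /\
  exists h : Hom C (projT1 p) (projT1 q),
    cmp (tenm (idm B) h) (projT2 p) = projT2 q.

Definition aux_sim (A B : Ob C) : relation (auxHom A B) :=
  clos_refl_sym_trans (auxHom A B) (@aux_tri A B).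

Definition theta (B E B' E' : Ob C) :
  Hom C (ten (ten B E) (ten B' E')) (ten (ten B B') (ten E E')) :=
  cmp (asci B B' (ten E E'))
  (cmp (tenm (idm B) (asc B' E E'))
  (cmp (tenm (idm B) (tenm (sym E B') (idm E')))
  (cmp (tenm (idm B) (asci E B' E'))
       (asc B E (ten B' E'))))).

Definition aux_cmp (A B D : Ob C) (q : auxHom B D) (p : auxHom A B) : auxHom A D :=
  existT _ (ten (projT1 q) (projT1 p))
    (cmp (asc D (projT1 q) (projT1 p)) (cmp (tenm (projT2 q) (idm (projT1 p))) (projT2 p))).

Definition aux_of (A B : Ob C) (g : Hom C A B) : auxHom A B :=
  existT _ unt (cmp (rui B) g).

Definition aux_id (A : Ob C) : auxHom A A := existT _ unt (rui A).

Definition aux_rst (A B : Ob C) (p : auxHom A B) : auxHom A A :=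
  existT _ unt (cmp (rui A) (rst (projT2 p))).

Definition aux_tenm (A B A' B' : Ob C) (p : auxHom A B) (p' : auxHom A' B')
  : auxHom (ten A A') (ten B B') :=
  existT _ (ten (projT1 p) (projT1 p'))
    (cmp (theta B (projT1 p) B' (projT1 p')) (tenm (projT2 p) (projT2 p'))).

Definition Aux_data : smr_data := {|
  Ob := Ob C;
  Hom := auxHom;
  cmp := aux_cmp;
  idm := aux_id;
  rst := aux_rst;
  ten := @ten C;
  tenm := aux_tenm;
  unt := @unt C;
  asc := fun A B D => aux_of (asc A B D);
  asci := fun A B D => aux_of (asci A B D);
  lu := fun A => aux_of (lu A);
  lui := fun A => aux_of (lui A);
  ru := fun A => aux_of (ru A);
  rui := fun A => aux_of (rui A);
  sym := fun A B => aux_of (sym A B)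
|}.

End Aux.

(* Main.v *)
Require Import Defs.
From Stdlib Require Import Relations Setoid Morphisms RelationClasses.

Section Basic.
Variable C : smr_data.
Hypothesis HC : SMRC C.
Implicit Types A B D E F G X Y Z W : Ob C.

Local Notation "g ∘ f" := (cmp g f) (at level 44, right associativity).
Local Notation "f ⊗ g" := (tenm f g) (at level 34).
Local Notation Hm := (Hom C).
Local Notation "'ι' X" := (@idm C X) (at level 0, X at level 0).

Lemma cA {A B D E} (h : Hm D E) (g : Hm B D) (f : Hm A B) : h ∘ g ∘ f = (h ∘ g) ∘ f.
Proof. exact (cmpA HC h g f). Qed.
Lemma c1l {A B} (f : Hm A B) : ι B ∘ f = f. Proof. exact (cmp1l HC f). Qed.
Lemma c1r {A B} (f : Hm A B) : f ∘ ι A = f. Proof. exact (cmp1r HC f). Qed.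
Lemma tc {A B D A' B' D'} (f : Hm A B) (g : Hm B D) (f' : Hm A' B') (g' : Hm B' D') :
  (g ∘ f) ⊗ (g' ∘ f') = (g ⊗ g') ∘ (f ⊗ f').
Proof. exact (tenm_cmp HC f g f' g'). Qed.
Lemma t11 A B : ι A ⊗ ι B = ι (@ten C A B). Proof. exact (tenm_id HC A B). Qed.

Ltac ra := repeat rewrite <- cA.

Lemma kify {A B} (x y : Hm A B) : (forall D (k : Hm D A), x ∘ k = y ∘ k) -> x = y.
Proof. intro H. rewrite <- (c1r x), <- (c1r y). apply H. Qed.

Lemma seg2 {A B D X} {a : Hm B D} {b : Hm A B} {y : Hm A D} :
  a ∘ b = y -> forall (k : Hm X A), a ∘ (b ∘ k) = y ∘ k.
Proof. intros H k. rewrite cA, H. reflexivity. Qed.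
Lemma seg3 {A B D E X} {a : Hm D E} {b : Hm B D} {c : Hm A B} {y} :
  a ∘ b ∘ c = y -> forall (k : Hm X A), a ∘ (b ∘ (c ∘ k)) = y ∘ k.
Proof. intros H k. rewrite !cA. rewrite <- (cA a b c), H. reflexivity. Qed.
Lemma seg4 {A B D E F X} {a : Hm E F} {b : Hm D E} {c : Hm B D} {d : Hm A B} {y} :
  a ∘ b ∘ c ∘ d = y -> forall (k : Hm X A), a ∘ (b ∘ (c ∘ (d ∘ k))) = y ∘ k.
Proof. intros H k. rewrite !cA. rewrite <- H. ra. reflexivity. Qed.
Lemma seg5 {A B D E F G X} {a : Hm F G} {b : Hm E F} {c : Hm D E} {d : Hm B D} {e : Hm A B} {y} :
  a ∘ b ∘ c ∘ d ∘ e = y -> forall (k : Hm X A), a ∘ (b ∘ (c ∘ (d ∘ (e ∘ k)))) = y ∘ k.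
Proof. intros H k. rewrite <- H. ra. reflexivity. Qed.
Lemma seg6 {A B D E F G H' X} {a : Hm G H'} {a0 : Hm F G} {b : Hm E F} {c : Hm D E} {d : Hm B D} {e : Hm A B} {y} :
  a ∘ a0 ∘ b ∘ c ∘ d ∘ e = y -> forall (k : Hm X A), a ∘ (a0 ∘ (b ∘ (c ∘ (d ∘ (e ∘ k))))) = y ∘ k.
Proof. intros H k. rewrite <- H. ra. reflexivity. Qed.
Lemma seg7 {A B D E F G H' I X} {a1 : Hm H' I} {a : Hm G H'} {a0 : Hm F G} {b : Hm E F} {c : Hm D E} {d : Hm B D} {e : Hm A B} {y} :
  a1 ∘ a ∘ a0 ∘ b ∘ c ∘ d ∘ e = y -> forall (k : Hm X A), a1 ∘ (a ∘ (a0 ∘ (b ∘ (c ∘ (d ∘ (e ∘ k)))))) = y ∘ k.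
Proof. intros H k. rewrite <- H. ra. reflexivity. Qed.

Ltac chain_len t := match t with cmp _ ?r => let n := chain_len r in constr:(S n) | _ => constr:(1) end.


Lemma tsl {A B D X} (g : Hm B D) (f : Hm A B) : (g ∘ f) ⊗ ι X = (g ⊗ ι X) ∘ (f ⊗ ι X).
Proof. rewrite <- tc, c1l. reflexivity. Qed.
Lemma tsr {A B D X} (g : Hm B D) (f : Hm A B) : ι X ⊗ (g ∘ f) = (ι X ⊗ g) ∘ (ι X ⊗ f).
Proof. rewrite <- tc, c1l. reflexivity. Qed.
Lemma tx {A B A' B'} (f : Hm A B) (g : Hm A' B') : f ⊗ g = (f ⊗ ι B') ∘ (ι A ⊗ g).
Proof. rewrite <- tc, c1l, c1r. reflexivity. Qed.
Lemma tx' {A B A' B'} (f : Hm A B) (g : Hm A' B') : f ⊗ g = (ι B ⊗ g) ∘ (f ⊗ ι A').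
Proof. rewrite <- tc, c1l, c1r. reflexivity. Qed.
Ltac nf1 := match goal with
  | |- context [ tenm (cmp ?g ?f) (idm ?X) ] => rewrite (@tsl _ _ _ X g f)
  | |- context [ tenm (idm ?X) (cmp ?g ?f) ] => rewrite (@tsr _ _ _ X g f)
  | |- context [ tenm (idm ?A) (idm ?B) ] => rewrite (t11 A B)
  | |- context [ cmp (idm ?B) ?f ] => rewrite (c1l f)
  | |- context [ cmp ?f (idm ?A) ] => rewrite (c1r f)
  | |- context [ cmp (cmp ?h ?g) ?f ] => rewrite <- (cA h g f)
  end.
Ltac nf := repeat nf1.
Ltac rw0 H := first [
    rewrite (seg7 H) | rewrite (seg6 H) | rewrite (seg5 H) | rewrite (seg4 H)
  | rewrite (seg3 H) | rewrite (seg2 H) | rewrite H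
  | setoid_rewrite (seg7 H) | setoid_rewrite (seg6 H) | setoid_rewrite (seg5 H) | setoid_rewrite (seg4 H)
  | setoid_rewrite (seg3 H) | setoid_rewrite (seg2 H) | setoid_rewrite H ]; nf.
Tactic Notation "rw" uconstr(H) := rw0 H.
Tactic Notation "rwr" uconstr(H) := rw0 uconstr:(eq_sym H).

Lemma tcomm {A B A' B' X} (f : Hm A B) (g : Hm A' B') (k : Hm X _) :
  (f ⊗ ι B') ∘ (ι A ⊗ g) ∘ k = (ι B ⊗ g) ∘ (f ⊗ ι A') ∘ k.
Proof. rewrite cA, <- tx, tx'. ra. reflexivity. Qed.
Lemma tcomm' {A B A' B' X} (f : Hm A B) (g : Hm A' B') (k : Hm X _) :
  (ι B ⊗ g) ∘ (f ⊗ ι A') ∘ k = (f ⊗ ι B') ∘ (ι A ⊗ g) ∘ k.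
Proof. symmetry. apply tcomm. Qed.



Lemma aa' A B D : asc A B D ∘ asci A B D = ι _. Proof. exact (asc_iso1 HC A B D). Qed.
Lemma a'a A B D : asci A B D ∘ asc A B D = ι _. Proof. exact (asc_iso2 HC A B D). Qed.
Lemma ll' A : lu A ∘ lui A = ι _. Proof. exact (lu_iso1 HC A). Qed.
Lemma l'l A : lui A ∘ lu A = ι _. Proof. exact (lu_iso2 HC A). Qed.
Lemma rr' A : ru A ∘ rui A = ι _. Proof. exact (ru_iso1 HC A). Qed.
Lemma r'r A : rui A ∘ ru A = ι _. Proof. exact (ru_iso2 HC A). Qed.
Lemma ss A B : sym B A ∘ sym A B = ι _. Proof. exact (sym_inv HC A B). Qed.

Lemma kc {A B X} {x : Hm B A} {y : Hm A B} : x ∘ y = ι A -> forall (k : Hm X A), x ∘ (y ∘ k) = k.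
Proof. intros H k. rewrite cA, H, c1l. reflexivity. Qed.
Lemma kcl {A B X Z} {x : Hm B A} {y : Hm A B} : x ∘ y = ι A -> forall (k : Hm X _),
  (x ⊗ ι Z) ∘ ((y ⊗ ι Z) ∘ k) = k.
Proof. intros H k. rewrite cA, <- tsl, H, t11, c1l. reflexivity. Qed.
Lemma kcr {A B X Z} {x : Hm B A} {y : Hm A B} : x ∘ y = ι A -> forall (k : Hm X _),
  (ι Z ⊗ x) ∘ ((ι Z ⊗ y) ∘ k) = k.
Proof. intros H k. rewrite cA, <- tsr, H, t11, c1l. reflexivity. Qed.
Lemma kcl0 {A B Z} {x : Hm B A} {y : Hm A B} : x ∘ y = ι A -> (x ⊗ ι Z) ∘ (y ⊗ ι Z) = ι _.
Proof. intros H. rewrite <- tsl, H, t11. reflexivity. Qed.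
Lemma kcr0 {A B Z} {x : Hm B A} {y : Hm A B} : x ∘ y = ι A -> (ι Z ⊗ x) ∘ (ι Z ⊗ y) = ι _.
Proof. intros H. rewrite <- tsr, H, t11. reflexivity. Qed.

Ltac inv_pf x y :=
  lazymatch x with
  | asc ?A ?B ?D => lazymatch y with asci A B D => constr:(aa' A B D) end
  | asci ?A ?B ?D => lazymatch y with asc A B D => constr:(a'a A B D) end
  | lu ?A => lazymatch y with lui A => constr:(ll' A) end
  | lui ?A => lazymatch y with lu A => constr:(l'l A) end
  | ru ?A => lazymatch y with rui A => constr:(rr' A) end
  | rui ?A => lazymatch y with ru A => constr:(r'r A) end
  | sym ?A ?B => lazymatch y with sym B A => constr:(ss B A) end
  | tenm (idm ?Z) ?x' => lazymatch y with tenm (idm Z) ?y' =>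
       let p := inv_pf x' y' in constr:(@kcr0 _ _ Z _ _ p) end
  | tenm ?x' (idm ?Z) => lazymatch y with tenm ?y' (idm Z) =>
       let p := inv_pf x' y' in constr:(@kcl0 _ _ Z _ _ p) end
  end.
Ltac cancel1 := match goal with
  | |- context [ cmp ?x (cmp ?y ?k) ] => let p := inv_pf x y in rewrite (kc p k)
  | |- context [ cmp ?x ?y ] => let p := inv_pf x y in rewrite p
  | |- context [ cmp (idm ?B) ?f ] => rewrite (c1l f)
  | |- context [ cmp ?f (idm ?A) ] => rewrite (c1r f)
  end.
Ltac cancel := repeat cancel1.

Lemma canc_r {A B D} (i : Hm A B) (j : Hm B A) (x y : Hm B D) :
  i ∘ j = ι _ -> x ∘ i = y ∘ i -> x = y.
Proof. intros H E. rewrite <- (c1r x), <- (c1r y), <- H, !cA, E. reflexivity. Qed.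
Lemma canc_l {A B D} (i : Hm A B) (j : Hm B A) (x y : Hm D A) :
  j ∘ i = ι _ -> i ∘ x = i ∘ y -> x = y.
Proof. intros H E. rewrite <- (c1l x), <- (c1l y), <- H, <- !cA, E. reflexivity. Qed.

Lemma an {A A' B B' D D'} (f : Hm A A') (g : Hm B B') (h : Hm D D') :
  asc A' B' D' ∘ ((f ⊗ g) ⊗ h) = (f ⊗ (g ⊗ h)) ∘ asc A B D.
Proof. exact (asc_nat HC f g h). Qed.
Lemma a'n {A A' B B' D D'} (f : Hm A A') (g : Hm B B') (h : Hm D D') :
  asci A' B' D' ∘ (f ⊗ (g ⊗ h)) = ((f ⊗ g) ⊗ h) ∘ asci A B D.
Proof.
  apply (canc_r (asc _ _ _) (asci _ _ _)); [apply aa'|].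
  ra. setoid_rewrite a'a. rewrite c1r. rewrite <- an. ra. cancel. reflexivity.
Qed.
Lemma ln {A B} (f : Hm A B) : lu B ∘ (ι _ ⊗ f) = f ∘ lu A.
Proof. exact (lu_nat HC f). Qed.
Lemma rn {A B} (f : Hm A B) : ru B ∘ (f ⊗ ι _) = f ∘ ru A.
Proof. exact (ru_nat HC f). Qed.
Lemma l'n {A B} (f : Hm A B) : lui B ∘ f = (ι _ ⊗ f) ∘ lui A.
Proof.
  apply (canc_r (lu _) (lui _)); [apply ll'|].
  ra. setoid_rewrite l'l. rewrite c1r. rewrite <- ln. ra. cancel. reflexivity.
Qed.
Lemma r'n {A B} (f : Hm A B) : rui B ∘ f = (f ⊗ ι _) ∘ rui A.
Proof.
  apply (canc_r (ru _) (rui _)); [apply rr'|].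
  ra. setoid_rewrite r'r. rewrite c1r. rewrite <- rn. ra. cancel. reflexivity.
Qed.
Lemma sn {A A' B B'} (f : Hm A A') (g : Hm B B') : sym A' B' ∘ (f ⊗ g) = (g ⊗ f) ∘ sym A B.
Proof. exact (sym_nat HC f g). Qed.

Lemma pent A B D E : asc A B (ten D E) ∘ asc (ten A B) D E =
  (ι A ⊗ asc B D E) ∘ asc A (ten B D) E ∘ (asc A B D ⊗ ι E).
Proof. exact (pentagon HC A B D E). Qed.
Lemma tri A B : (ι A ⊗ lu B) ∘ asc A unt B = ru A ⊗ ι B.
Proof. exact (triangle HC A B). Qed.
Lemma hex A B D : (ι B ⊗ sym A D) ∘ asc B A D ∘ (sym A B ⊗ ι D) =
  asc B D A ∘ sym A (ten B D) ∘ asc A B D.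
Proof. exact (hexagon HC A B D). Qed.


Lemma anl {A A' B D} (f : Hm A A') : asc A' B D ∘ ((f ⊗ ι B) ⊗ ι D) = (f ⊗ ι _) ∘ asc A B D.
Proof. rewrite an, t11. reflexivity. Qed.
Lemma anm {A B B' D} (g : Hm B B') : asc A B' D ∘ ((ι A ⊗ g) ⊗ ι D) = (ι A ⊗ (g ⊗ ι D)) ∘ asc A B D.
Proof. rewrite an. reflexivity. Qed.
Lemma anr {A B D D'} (h : Hm D D') : asc A B D' ∘ (ι _ ⊗ h) = (ι A ⊗ (ι B ⊗ h)) ∘ asc A B D.
Proof. rewrite <- t11, an. reflexivity. Qed.
Lemma a'nl {A A' B D} (f : Hm A A') : asci A' B D ∘ (f ⊗ ι _) = ((f ⊗ ι B) ⊗ ι D) ∘ asci A B D.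
Proof. rewrite <- t11, a'n. reflexivity. Qed.
Lemma a'nm {A B B' D} (g : Hm B B') : asci A B' D ∘ (ι A ⊗ (g ⊗ ι D)) = ((ι A ⊗ g) ⊗ ι D) ∘ asci A B D.
Proof. rewrite a'n. reflexivity. Qed.
Lemma a'nr {A B D D'} (h : Hm D D') : asci A B D' ∘ (ι A ⊗ (ι B ⊗ h)) = (ι _ ⊗ h) ∘ asci A B D.
Proof. rewrite a'n, t11. reflexivity. Qed.

Lemma lr2 {A B D X} {x : Hm B D} {y : Hm A B} {z} : x ∘ y = z -> (ι X ⊗ x) ∘ (ι X ⊗ y) = ι X ⊗ z.
Proof. intro H. rewrite <- tsr, H. reflexivity. Qed.
Lemma ll2 {A B D X} {x : Hm B D} {y : Hm A B} {z} : x ∘ y = z -> (x ⊗ ι X) ∘ (y ⊗ ι X) = z ⊗ ι X.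
Proof. intro H. rewrite <- tsl, H. reflexivity. Qed.
Lemma lr3 {A B D E X} {x : Hm D E} {y : Hm B D} {w : Hm A B} {z} : x ∘ y ∘ w = z -> (ι X ⊗ x) ∘ (ι X ⊗ y) ∘ (ι X ⊗ w) = ι X ⊗ z.
Proof. intro H. rewrite cA, <- !tsr, <- cA, H. reflexivity. Qed.
Lemma ll3 {A B D E X} {x : Hm D E} {y : Hm B D} {w : Hm A B} {z} : x ∘ y ∘ w = z -> (x ⊗ ι X) ∘ (y ⊗ ι X) ∘ (w ⊗ ι X) = z ⊗ ι X.
Proof. intro H. rewrite cA, <- !tsl, <- cA, H. reflexivity. Qed.
Lemma lr4 {A B D E F X} {x : Hm E F} {x0 : Hm D E} {y : Hm B D} {w : Hm A B} {z} : x ∘ x0 ∘ y ∘ w = z -> (ι X ⊗ x) ∘ (ι X ⊗ x0) ∘ (ι X ⊗ y) ∘ (ι X ⊗ w) = ι X ⊗ z.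
Proof. intro H. rewrite <- H. nf. reflexivity. Qed.
Lemma ll4 {A B D E F X} {x : Hm E F} {x0 : Hm D E} {y : Hm B D} {w : Hm A B} {z} : x ∘ x0 ∘ y ∘ w = z -> (x ⊗ ι X) ∘ (x0 ⊗ ι X) ∘ (y ⊗ ι X) ∘ (w ⊗ ι X) = z ⊗ ι X.
Proof. intro H. rewrite <- H. nf. reflexivity. Qed.

Lemma fr {A B} (f g : Hm A B) : f ⊗ ι unt = g ⊗ ι unt -> f = g.
Proof.
  intro H. apply (canc_r (ru A) (rui A)); [apply rr'|]. rewrite <- !rn, H. reflexivity.
Qed.
Lemma fl {A B} (f g : Hm A B) : ι unt ⊗ f = ι unt ⊗ g -> f = g.
Proof.
  intro H. apply (canc_r (lu A) (lui A)); [apply ll'|]. rewrite <- !ln, H. reflexivity.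
Qed.

Lemma kelly_r A B : (ι A ⊗ ru B) ∘ asc A B unt = ru (ten A B).
Proof.
  apply fr. apply (canc_l (asc A B unt) (asci A B unt)); [apply a'a|].
  rewrite <- (tri (ten A B) unt). nf. rw (anr (lu (@unt C))). rw (pent A B unt unt).
  rw (lr2 (tri B unt)). rw (anm (ru B)). reflexivity.
Qed.

Ltac isoc := nf; cancel; reflexivity.

Lemma kelly_l A B : lu (ten A B) ∘ asc unt A B = lu A ⊗ ι B.
Proof.
  apply fl.
  apply (canc_r (asc unt (ten unt A) B ∘ (asc unt unt A ⊗ ι B)) ((asci unt unt A ⊗ ι B) ∘ asci unt (ten unt A) B)); [isoc|].
  nf. rwr (pent unt unt A B). rw (tri unt (ten A B)). rwr (anl (ru (@unt C))).
  rwr (anm (lu A)). rw (ll2 (tri unt A)). reflexivity.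
Qed.

Lemma kelly_l' A B : (lu A ⊗ ι B) ∘ asci unt A B = lu (ten A B).
Proof. rewrite <- kelly_l. ra. cancel. reflexivity. Qed.
Lemma kelly_r' A B : asci A B unt ∘ (ι A ⊗ rui B) = rui (ten A B).
Proof.
  apply (canc_l (ru (ten A B)) (rui (ten A B))); [apply r'r|].
  rewrite <- (kelly_r A B) at 1. ra. cancel. reflexivity.
Qed.

Lemma lu_ten_unt A : lu (ten unt A) = ι unt ⊗ lu A.
Proof.
  apply (canc_l (lu A) (lui A)); [apply l'l|]. rewrite ln. reflexivity.
Qed.

Lemma lu_ru_unt : lu (@unt C) = ru (@unt C).
Proof.
  apply fr. rewrite <- kelly_l, <- tri. rewrite lu_ten_unt. reflexivity.
Qed.

Lemma lu_sym A : lu A ∘ sym A unt = ru A.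
Proof.
  apply fr. apply (canc_l (sym A unt) (sym unt A)); [apply ss|].
  nf. rwr (kelly_l A unt). rwr (ln (sym A unt)). rw (hex A unt unt).
  rw (kelly_l unt A). rwr (sn (ι A) (lu (@unt C))). rw (tri A unt). reflexivity.
Qed.

Lemma ru_sym A : ru A ∘ sym unt A = lu A.
Proof. rewrite <- lu_sym. ra. cancel. reflexivity. Qed.

Lemma lemS B E : (ι B ⊗ lu E) ∘ asc B unt E ∘ (sym unt B ⊗ ι E) ∘ asci unt B E = lu (ten B E).
Proof. rw (tri B E). rw (ll2 (ru_sym B)). apply kelly_l'. Qed.

Lemma lr5 {A B D E F G X} {x1 : Hm F G} {x : Hm E F} {x0 : Hm D E} {y : Hm B D} {w : Hm A B} {z} : x1 ∘ x ∘ x0 ∘ y ∘ w = z -> (ι X ⊗ x1) ∘ (ι X ⊗ x) ∘ (ι X ⊗ x0) ∘ (ι X ⊗ y) ∘ (ι X ⊗ w) = ι X ⊗ z.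
Proof. intro H. rewrite <- H. nf. reflexivity. Qed.
Lemma ll5 {A B D E F G X} {x1 : Hm F G} {x : Hm E F} {x0 : Hm D E} {y : Hm B D} {w : Hm A B} {z} : x1 ∘ x ∘ x0 ∘ y ∘ w = z -> (x1 ⊗ ι X) ∘ (x ⊗ ι X) ∘ (x0 ⊗ ι X) ∘ (y ⊗ ι X) ∘ (w ⊗ ι X) = z ⊗ ι X.
Proof. intro H. rewrite <- H. nf. reflexivity. Qed.

Lemma tri' A B : (ru A ⊗ ι B) ∘ asci A unt B = ι A ⊗ lu B.
Proof. rewrite <- tri. ra. cancel. reflexivity. Qed.

Local Notation th := (@theta C).

Lemma thE B E B' E' : th B E B' E' = asci B B' (ten E E') ∘ (ι B ⊗ asc B' E E') ∘
  (ι B ⊗ (sym E B' ⊗ ι E')) ∘ (ι B ⊗ asci E B' E') ∘ asc B E (ten B' E').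
Proof. reflexivity. Qed.

Lemma K2 A B : (ι _ ⊗ lu unt) ∘ th A unt B unt ∘ (rui A ⊗ rui B) = rui (ten A B).
Proof.
  rewrite thE. rewrite (tx (rui A)). ra. rwr (a'nr (lu (@unt C))).
  rw (lr4 (lemS B unt)). rw (tri A (ten B unt)). cancel. apply kelly_r'.
Qed.

Lemma K6 B E : (ι B ⊗ lu E) ∘ (lu B ⊗ ι _) ∘ th unt unt B E ∘ (rui unt ⊗ ι _) = lu (ten B E).
Proof.
  rewrite thE. ra. rw (tcomm' (lu B) (lu E)). rwr (a'nr (lu E)). rw (kelly_l' B E).
  rw (lr4 (lemS B E)). rw (tri unt (ten B E)). cancel. reflexivity.
Qed.

Lemma inner7 E : lu E ∘ (ι _ ⊗ ru E) ∘ asc unt E unt ∘ (sym E unt ⊗ ι _) ∘ asci E unt unt = ru E ∘ (ι E ⊗ lu unt).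
Proof.
  rw (ln (ru E)). rw (kelly_l E unt). rw (ll2 (lu_sym E)). rw (tri' E unt). reflexivity.
Qed.

Lemma K7 B E : (ι B ⊗ ru E) ∘ (ru B ⊗ ι _) ∘ th B E unt unt ∘ (ι _ ⊗ rui unt) = ru (ten B E).
Proof.
  rewrite thE. ra. rw (tcomm' (ru B) (ru E)). rwr (a'nr (ru E)). rw (tri' B E).
  rw (lr5 (inner7 E)). nf. rwr (anr (lu (@unt C))). rw (kelly_r B E).
  rewrite lu_ru_unt. cancel. reflexivity.
Qed.

Lemma hexs A B D : sym A (ten B D) =
  asci B D A ∘ (ι B ⊗ sym A D) ∘ asc B A D ∘ (sym A B ⊗ ι D) ∘ asci A B D.
Proof. rw (hex A B D). cancel. reflexivity. Qed.

Lemma hexs' A B D : sym (ten A B) D =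
  asc D A B ∘ (sym A D ⊗ ι B) ∘ asci A D B ∘ (ι A ⊗ sym B D) ∘ asc A B D.
Proof.
  apply (canc_r (sym D (ten A B)) (sym (ten A B) D)); [apply ss|].
  rewrite ss. rewrite hexs. ra. cancel. reflexivity.
Qed.

Lemma pent_i1 A B D E : asc (ten A B) D E ∘ (asci A B D ⊗ ι E) ∘ asci A (ten B D) E ∘ (ι A ⊗ asci B D E)
  = asci A B (ten D E).
Proof.
  apply (canc_l (asc A B (ten D E)) (asci A B (ten D E))); [apply a'a|].
  rw (pent A B D E). cancel. reflexivity.
Qed.

Lemma K8 B E B' E' : (ι _ ⊗ sym E E') ∘ (sym B B' ⊗ ι _) ∘ th B E B' E' =
  th B' E' B E ∘ sym (ten B E) (ten B' E').
Proof.
  apply kify; intros X k. symmetry.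
  rewrite !thE. rewrite (hexs' B E (ten B' E')). ra. nf.
  rewrite (hexs B B' E'), (hexs E B' E'). nf.
  rw (pent B' E' B E). cancel.
  rw (anm (sym B E')). cancel.
  rwr (pent B' B E' E). cancel.
  rw (anl (sym B B')).
  rw (pent_i1 B B' E' E).
  rw (a'nr (sym E E')). rw (tcomm (sym B B') (sym E E')). reflexivity.
Qed.

Lemma pr {A B B' D D' F} (b : Hm B B') (x : Hm D' F) (y : Hm A D') (z : Hm D F) (w : Hm A D) :
  x ∘ y = z ∘ w -> (ι B' ⊗ x) ∘ (b ⊗ y) = (b ⊗ z) ∘ (ι B ⊗ w).
Proof. intro H. rewrite <- !tc, c1l, c1r, H. reflexivity. Qed.
Lemma pl {A B B' D D' F} (b : Hm B B') (x : Hm D' F) (y : Hm A D') (z : Hm D F) (w : Hm A D) :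
  x ∘ y = z ∘ w -> (x ⊗ ι B') ∘ (y ⊗ b) = (z ⊗ b) ∘ (w ⊗ ι B).
Proof. intro H. rewrite <- !tc, c1l, c1r, H. reflexivity. Qed.

Lemma thn {B1 B2 E1 E2 B1' B2' E1' E2'} (b : Hm B1 B2) (e : Hm E1 E2) (b' : Hm B1' B2') (e' : Hm E1' E2') :
  th B2 E2 B2' E2' ∘ ((b ⊗ e) ⊗ (b' ⊗ e')) = ((b ⊗ b') ⊗ (e ⊗ e')) ∘ th B1 E1 B1' E1'.
Proof.
  apply kify; intros X k. rewrite !thE. ra.
  rw (an b e (b' ⊗ e')).
  rw (pr b _ _ _ _ (a'n e b' e')).
  rw (pr b _ _ _ _ (pl e' _ _ _ _ (sn e b'))).
  rw (pr b _ _ _ _ (an b' e e')).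
  rw (a'n b b' (e ⊗ e')). reflexivity.
Qed.

Lemma LA {L M N Z W W' V} (cn : Hm (ten N Z) W) (cm : Hm (ten M W) W') (cl : Hm (ten L W') V) :
  (cl ∘ (ι L ⊗ (cm ∘ (ι M ⊗ cn) ∘ asc M N Z)) ∘ asc L (ten M N) Z) ∘ (asc L M N ⊗ ι Z)
  = (cl ∘ (ι L ⊗ cm) ∘ asc L M W) ∘ (ι (ten L M) ⊗ cn) ∘ asc (ten L M) N Z.
Proof.
  apply kify; intros X k. nf. rw (anr cn). rw (pent L M N Z). reflexivity.
Qed.
Lemma LAi {L M N Z W W' V} (cn : Hm (ten N Z) W) (cm : Hm (ten M W) W') (cl : Hm (ten L W') V) :
  ((cl ∘ (ι L ⊗ cm) ∘ asc L M W) ∘ (ι (ten L M) ⊗ cn) ∘ asc (ten L M) N Z) ∘ (asci L M N ⊗ ι Z)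
  = cl ∘ (ι L ⊗ (cm ∘ (ι M ⊗ cn) ∘ asc M N Z)) ∘ asc L (ten M N) Z.
Proof.
  rewrite <- LA. rewrite <- cA, <- tsl, aa', t11, c1r. reflexivity.
Qed.
Lemma LL {L L' R Z W V} (x : Hm L L') (cr : Hm (ten R Z) W) (c1 : Hm (ten L W) V) (c2 : Hm (ten L' W) V) :
  c2 ∘ (x ⊗ ι W) = c1 -> (c2 ∘ (ι L' ⊗ cr) ∘ asc L' R Z) ∘ ((x ⊗ ι R) ⊗ ι Z) = c1 ∘ (ι L ⊗ cr) ∘ asc L R Z.
Proof.
  intro H. rewrite <- H. apply kify; intros X k. nf. rw (anl x). rw (tcomm x cr). reflexivity.
Qed.
Lemma LR {L R R' Z W V} (y : Hm R R') (cl : Hm (ten L W) V) (c1 : Hm (ten R Z) W) (c2 : Hm (ten R' Z) W) :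
  c2 ∘ (y ⊗ ι Z) = c1 -> (cl ∘ (ι L ⊗ c2) ∘ asc L R' Z) ∘ ((ι L ⊗ y) ⊗ ι Z) = cl ∘ (ι L ⊗ c1) ∘ asc L R Z.
Proof.
  intro H. rewrite <- H. apply kify; intros X k. nf. rw (anm y). reflexivity.
Qed.
Lemma LI {T Z V} (c : Hm (ten T Z) V) : c ∘ (ι T ⊗ ι Z) = c.
Proof. rewrite t11, c1r. reflexivity. Qed.
Lemma LC {X1 X2 X3 Z V} (s1 : Hm X2 X3) (s2 : Hm X1 X2) (c3 : Hm (ten X3 Z) V) c2 c1 :
  c3 ∘ (s1 ⊗ ι Z) = c2 -> c2 ∘ (s2 ⊗ ι Z) = c1 -> c3 ∘ ((s1 ∘ s2) ⊗ ι Z) = c1.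
Proof. intros H1 H2. rewrite tsl, cA, H1, H2. reflexivity. Qed.
Lemma acoh_fin {X Y V} (P Q : Hm X Y) (c : Hm (ten Y unt) V) (j : Hm V (ten Y unt)) (d : Hm (ten X unt) V) :
  j ∘ c = ι _ -> c ∘ (P ⊗ ι unt) = d -> c ∘ (Q ⊗ ι unt) = d -> P = Q.
Proof.
  intros Hj HP HQ. apply fr. apply (canc_l c j); [exact Hj|]. rewrite HP, HQ. reflexivity.
Qed.

Ltac can T Z :=
  lazymatch T with
  | ten ?L ?R => let cr := can R Z in
      lazymatch type of cr with Hom _ _ ?W =>
        let cl := can L W in constr:(cl ∘ (ι L ⊗ cr) ∘ asc L R Z) end
  | _ => constr:(@idm C (ten T Z))
  end.
Ltac caninv T Z :=
  lazymatch T with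
  | ten ?L ?R => let cr := can R Z in let ir := caninv R Z in
      lazymatch type of cr with Hom _ _ ?W =>
        let il := caninv L W in constr:(asci L R Z ∘ (ι L ⊗ ir) ∘ il) end
  | _ => constr:(@idm C (ten T Z))
  end.

Ltac solve_step :=
  lazymatch goal with
  | |- cmp _ (tenm (asc _ _ _) (idm _)) = _ => apply LA
  | |- cmp _ (tenm (asci _ _ _) (idm _)) = _ => apply LAi
  | |- cmp _ (tenm (idm _) (idm _)) = _ => apply LI
  | |- cmp _ (tenm (tenm (idm _) _) (idm _)) = _ => apply LR; solve_step
  | |- cmp _ (tenm (tenm _ (idm _)) (idm _)) = _ => apply LL; solve_step
  end.
Ltac solve_path :=
  lazymatch goal with
  | |- cmp _ (tenm (cmp _ _) (idm _)) = _ => eapply LC; [solve_step | solve_path]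
  | |- _ => solve_step
  end.
Ltac acoh :=
  lazymatch goal with |- @eq (Hom _ ?X ?Y) ?P ?Q =>
    let c := can Y (@unt C) in let j := caninv Y (@unt C) in
    eapply (acoh_fin P Q c j); [nf; cancel; reflexivity | solve_path | solve_path]
  end.

Lemma acoh_test A B D E : asc A B (ten D E) ∘ asc (ten A B) D E =
  (ι A ⊗ asc B D E) ∘ asc A (ten B D) E ∘ (asc A B D ⊗ ι E).
Proof. acoh. Qed.
Lemma acoh_test2 A B D E : asc (ten A B) D E ∘ (asci A B D ⊗ ι E) ∘ asci A (ten B D) E ∘ (ι A ⊗ asci B D E)
  = asci A B (ten D E).
Proof. acoh. Qed.
Lemma acoh_test3 A B D E F : (ι A ⊗ asc (ten B D) E F) ∘ asc A (ten (ten B D) E) F ∘ (asc A (ten B D) E ⊗ ι F)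
  = (ι A ⊗ (asci B D (ten E F))) ∘ (ι A ⊗ (ι B ⊗ asc D E F)) ∘ (ι A ⊗ asc B (ten D E) F) ∘ (ι A ⊗ (asc B D E ⊗ ι F)) ∘ asc A (ten (ten B D) E) F ∘ (asc A (ten B D) E ⊗ ι F) ∘ (asci A (ten B D) E ⊗ ι F) ∘ asci A (ten (ten B D) E) F ∘ (ι A ⊗ (asci B D E ⊗ ι F)) ∘ (ι A ⊗ asci B (ten D E) F) ∘ (ι A ⊗ (ι B ⊗ asci D E F)) ∘ (ι A ⊗ (asc B D (ten E F))) ∘ (ι A ⊗ asc (ten B D) E F) ∘ asc A (ten (ten B D) E) F ∘ (asc A (ten B D) E ⊗ ι F).
Proof. acoh. Qed.

Lemma K9 B E B' E' : th B B' E E' ∘ th B E B' E' = ι _.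
Proof. rewrite !thE. ra. cancel. reflexivity. Qed.

Definition K5W A B D E F G : Hm (ten (ten (ten A E) (ten B F)) (ten D G)) (ten (ten A (ten B D)) (ten E (ten F G))) :=
  (asci A (ten B D) (ten E (ten F G)) ∘ (ι A ⊗ asci B D (ten E (ten F G))) ∘ (ι A ⊗ (ι B ⊗ asc D E (ten F G))))
  ∘ (ι A ⊗ (ι B ⊗ (sym E D ⊗ ι (ten F G))))
  ∘ ((ι A ⊗ (ι B ⊗ asci E D (ten F G))) ∘ (ι A ⊗ (ι B ⊗ (ι E ⊗ asc D F G))) ∘ (ι A ⊗ asc B E (ten (ten D F) G)))
  ∘ (ι A ⊗ (ι (ten B E) ⊗ (sym F D ⊗ ι G)))
  ∘ (ι A ⊗ (sym E B ⊗ ι (ten (ten F D) G)))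
  ∘ ((ι A ⊗ (ι (ten E B) ⊗ asci F D G)) ∘ (ι A ⊗ asc (ten E B) F (ten D G)) ∘ asc A (ten (ten E B) F) (ten D G)
      ∘ ((ι A ⊗ asci E B F) ⊗ ι (ten D G)) ∘ (asc A E (ten B F) ⊗ ι (ten D G))).

Lemma tcomm0 {A B A' B'} (f : Hm A B) (g : Hm A' B') : (ι B ⊗ g) ∘ (f ⊗ ι A') = (f ⊗ ι B') ∘ (ι A ⊗ g).
Proof. rewrite <- tx, <- tx'. reflexivity. Qed.

Lemma SL1 {T T'} (x : Hm T T') A F D G :
  (ι A ⊗ (ι T' ⊗ asci F D G)) ∘ (ι A ⊗ asc T' F (ten D G)) ∘ asc A (ten T' F) (ten D G) ∘ ((ι A ⊗ (x ⊗ ι F)) ⊗ ι (ten D G))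
  = (ι A ⊗ (x ⊗ ι (ten (ten F D) G))) ∘ (ι A ⊗ (ι T ⊗ asci F D G)) ∘ (ι A ⊗ asc T F (ten D G)) ∘ asc A (ten T F) (ten D G).
Proof.
  apply kify; intros X k. nf. rw (anm (x ⊗ ι F)). rw (lr2 (anl x)). rw (lr2 (tcomm0 x (asci F D G))). reflexivity.
Qed.
Lemma SL2 {T T'} (x : Hm T T') A B E G :
  (ι (ten A B) ⊗ ((ι E ⊗ x) ⊗ ι G)) ∘ (ι (ten A B) ⊗ asci E T G) ∘ asc (ten A B) E (ten T G) ∘ (asci A B E ⊗ ι (ten T G)) ∘ asci A (ten B E) (ten T G)
  = (ι (ten A B) ⊗ asci E T' G) ∘ asc (ten A B) E (ten T' G) ∘ (asci A B E ⊗ ι (ten T' G)) ∘ asci A (ten B E) (ten T' G)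
    ∘ (ι A ⊗ (ι (ten B E) ⊗ (x ⊗ ι G))).
Proof.
  apply kify; intros X k. nf. rw (lr2 (eq_sym (a'nm x))). rwr (anr (x ⊗ ι G)). rw (tcomm0 (asci A B E) (x ⊗ ι G)).
  rwr (a'nr (x ⊗ ι G)). reflexivity.
Qed.
Lemma SL3 {T T'} (x : Hm T T') A B F G :
  (ι (ten A B) ⊗ ((x ⊗ ι F) ⊗ ι G)) ∘ (ι (ten A B) ⊗ asci T F G) ∘ asci A B (ten T (ten F G))
  = (ι (ten A B) ⊗ asci T' F G) ∘ asci A B (ten T' (ten F G)) ∘ (ι A ⊗ (ι B ⊗ (x ⊗ ι (ten F G)))).
Proof.
  apply kify; intros X k. nf. rw (lr2 (eq_sym (a'nl x))). rwr (a'nr (x ⊗ ι (ten F G))). reflexivity.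
Qed.

Lemma K5L A B D E F G : (ι _ ⊗ asc E F G) ∘ (asc A B D ⊗ ι _) ∘ th (ten A B) (ten E F) D G ∘ (th A E B F ⊗ ι _)
  = K5W A B D E F G.
Proof.
  unfold K5W. apply kify; intros X k. rewrite !thE. rewrite (hexs' E F D). nf.
  rwr (SL1 (sym E B) A F D G).
  assert (EqP2 : (ι A ⊗ (ι B ⊗ asci E D (ten F G))) ∘ (ι A ⊗ (ι B ⊗ (ι E ⊗ asc D F G))) ∘ (ι A ⊗ asc B E (ten (ten D F) G))
    = asc A B (ten (ten E D) (ten F G)) ∘ (ι (ten A B) ⊗ asc (ten E D) F G) ∘ (ι (ten A B) ⊗ (asci E D F ⊗ ι G))
      ∘ (ι (ten A B) ⊗ asci E (ten D F) G) ∘ asc (ten A B) E (ten (ten D F) G) ∘ (asci A B E ⊗ ι (ten (ten D F) G))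
      ∘ asci A (ten B E) (ten (ten D F) G)) by acoh.
  rw EqP2.
  rwr (SL2 (sym F D) A B E G).
  assert (EqM : (ι (ten A B) ⊗ asci E (ten F D) G) ∘ asc (ten A B) E (ten (ten F D) G) ∘ (asci A B E ⊗ ι (ten (ten F D) G))
      ∘ asci A (ten B E) (ten (ten F D) G) ∘ (ι A ⊗ (ι (ten B E) ⊗ asci F D G)) ∘ (ι A ⊗ asc (ten B E) F (ten D G))
      ∘ asc A (ten (ten B E) F) (ten D G)
    = (ι (ten A B) ⊗ (asc E F D ⊗ ι G)) ∘ (ι (ten A B) ⊗ asci (ten E F) D G) ∘ asc (ten A B) (ten E F) (ten D G)
      ∘ (asci A B (ten E F) ⊗ ι (ten D G)) ∘ ((ι A ⊗ asc B E F) ⊗ ι (ten D G))) by acoh.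
  rw EqM.
  assert (EqP3 : asci A (ten B D) (ten E (ten F G)) ∘ (ι A ⊗ asci B D (ten E (ten F G))) ∘ (ι A ⊗ (ι B ⊗ asc D E (ten F G)))
    = (ι (ten A (ten B D)) ⊗ asc E F G) ∘ (asc A B D ⊗ ι (ten (ten E F) G)) ∘ asci (ten A B) D (ten (ten E F) G)
      ∘ (ι (ten A B) ⊗ asc D (ten E F) G) ∘ (ι (ten A B) ⊗ (asc D E F ⊗ ι G))
      ∘ (ι (ten A B) ⊗ asci (ten D E) F G) ∘ asci A B (ten (ten D E) (ten F G))) by acoh.
  rw EqP3.
  rwr (SL3 (sym E D) A B F G). cancel. reflexivity.
Qed.

Lemma SL4 {T T'} (x : Hm T T') A E B G :
  (ι A ⊗ (ι (ten E B) ⊗ (x ⊗ ι G))) ∘ (ι A ⊗ asci E B (ten T G)) ∘ asc A E (ten B (ten T G))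
  = (ι A ⊗ asci E B (ten T' G)) ∘ asc A E (ten B (ten T' G)) ∘ (ι (ten A E) ⊗ (ι B ⊗ (x ⊗ ι G))).
Proof.
  apply kify; intros X k. nf. rw (lr2 (eq_sym (a'nr (x ⊗ ι G)))). rw (eq_sym (anr (ι B ⊗ (x ⊗ ι G)))). reflexivity.
Qed.
Lemma SL5 {T T'} (x : Hm T T') A D F G :
  (ι A ⊗ ((x ⊗ ι D) ⊗ ι (ten F G))) ∘ (ι A ⊗ asci T D (ten F G)) ∘ (ι A ⊗ (ι T ⊗ asc D F G))
  = (ι A ⊗ asci T' D (ten F G)) ∘ (ι A ⊗ (ι T' ⊗ asc D F G)) ∘ (ι A ⊗ (x ⊗ ι (ten (ten D F) G))).
Proof.
  apply kify; intros X k. nf. rw (lr2 (eq_sym (a'nl x))). rw (lr2 (eq_sym (tcomm0 x (asc D F G)))). reflexivity.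
Qed.
Lemma SL6 {T T'} (x : Hm T T') A B F G :
  (ι A ⊗ ((ι B ⊗ x) ⊗ ι (ten F G))) ∘ (ι A ⊗ asci B T (ten F G))
  = (ι A ⊗ asci B T' (ten F G)) ∘ (ι A ⊗ (ι B ⊗ (x ⊗ ι (ten F G)))).
Proof.
  apply kify; intros X k. nf. rw (lr2 (eq_sym (a'nm x))). reflexivity.
Qed.

Lemma K5R A B D E F G : th A E (ten B D) (ten F G) ∘ (ι _ ⊗ th B F D G) ∘ asc (ten A E) (ten B F) (ten D G)
  = K5W A B D E F G.
Proof.
  unfold K5W. apply kify; intros X k. rewrite !thE. rewrite (hexs E B D). nf.
  rw (lr2 (tcomm0 (sym E B) (sym F D ⊗ ι G))).
  assert (EqQ1 : (ι A ⊗ (ι (ten E B) ⊗ asci F D G)) ∘ (ι A ⊗ asc (ten E B) F (ten D G)) ∘ asc A (ten (ten E B) F) (ten D G)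
      ∘ ((ι A ⊗ asci E B F) ⊗ ι (ten D G)) ∘ (asc A E (ten B F) ⊗ ι (ten D G))
    = (ι A ⊗ asci E B (ten (ten F D) G)) ∘ asc A E (ten B (ten (ten F D) G))
      ∘ (ι (ten A E) ⊗ (ι B ⊗ asci F D G)) ∘ (ι (ten A E) ⊗ asc B F (ten D G)) ∘ asc (ten A E) (ten B F) (ten D G)) by acoh.
  rw EqQ1.
  rw (SL4 (sym F D) A E B G).
  assert (EqP2 : (ι A ⊗ (ι B ⊗ asci E D (ten F G))) ∘ (ι A ⊗ (ι B ⊗ (ι E ⊗ asc D F G))) ∘ (ι A ⊗ asc B E (ten (ten D F) G))
    = (ι A ⊗ asc B (ten E D) (ten F G)) ∘ (ι A ⊗ (asc B E D ⊗ ι (ten F G)))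
      ∘ (ι A ⊗ asci (ten B E) D (ten F G)) ∘ (ι A ⊗ (ι (ten B E) ⊗ asc D F G))) by acoh.
  rw EqP2.
  rwr (SL5 (sym E B) A D F G).
  assert (EqM2 : (ι A ⊗ asci (ten E B) D (ten F G)) ∘ (ι A ⊗ (ι (ten E B) ⊗ asc D F G))
      ∘ (ι A ⊗ asci E B (ten (ten D F) G)) ∘ asc A E (ten B (ten (ten D F) G))
    = (ι A ⊗ (asci E B D ⊗ ι (ten F G))) ∘ (ι A ⊗ asci E (ten B D) (ten F G)) ∘ asc A E (ten (ten B D) (ten F G))
      ∘ (ι (ten A E) ⊗ asci B D (ten F G)) ∘ (ι (ten A E) ⊗ (ι B ⊗ asc D F G))) by acoh.
  rw EqM2.
  assert (EqP3 : asci A (ten B D) (ten E (ten F G)) ∘ (ι A ⊗ asci B D (ten E (ten F G))) ∘ (ι A ⊗ (ι B ⊗ asc D E (ten F G)))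
    = asci A (ten B D) (ten E (ten F G)) ∘ (ι A ⊗ asc (ten B D) E (ten F G)) ∘ (ι A ⊗ (asci B D E ⊗ ι (ten F G)))
      ∘ (ι A ⊗ asci B (ten D E) (ten F G))) by acoh.
  rw EqP3.
  rwr (SL6 (sym E D) A B F G). cancel. reflexivity.
Qed.

Lemma K5 A B D E F G : (ι _ ⊗ asc E F G) ∘ (asc A B D ⊗ ι _) ∘ th (ten A B) (ten E F) D G ∘ (th A E B F ⊗ ι _)
  = th A E (ten B D) (ten F G) ∘ (ι _ ⊗ th B F D G) ∘ asc (ten A E) (ten B F) (ten D G).
Proof. rewrite K5L, K5R. reflexivity. Qed.

Lemma K4 D F E D' F' E' :
  (ι _ ⊗ th F E F' E') ∘ th D (ten F E) D' (ten F' E') ∘ (asc D F E ⊗ asc D' F' E')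
  = asc (ten D D') (ten F F') (ten E E') ∘ (th D F D' F' ⊗ ι _) ∘ th (ten D F) E (ten D' F') E'.
Proof.
  apply (canc_l (th D D' (ten F E) (ten F' E') ∘ (ι _ ⊗ th F F' E E'))
                ((ι _ ⊗ th F E F' E') ∘ th D (ten F E) D' (ten F' E'))).
  { ra. rw (K9 D D' (ten F E) (ten F' E')). rw (lr2 (K9 F F' E E')). reflexivity. }
  apply kify; intros X k. ra. rw (lr2 (K9 F E F' E')). rw (K9 D (ten F E) D' (ten F' E')).
  rwr (K5 D F E D' F' E'). rw (ll2 (K9 D F D' F')). rw (K9 (ten D F) E (ten D' F') E').
  rewrite (tx' (asc D F E)). ra. reflexivity.
Qed.

Lemma rR1 {A B} (f : Hm A B) : f ∘ rst f = f. Proof. exact (R1 HC f). Qed.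
Lemma rR2 {A B D} (f : Hm A B) (g : Hm A D) : rst f ∘ rst g = rst g ∘ rst f. Proof. exact (R2 HC f g). Qed.
Lemma rR3 {A B D} (f : Hm A B) (g : Hm A D) : rst (g ∘ rst f) = rst g ∘ rst f. Proof. exact (R3 HC f g). Qed.
Lemma rR4 {A B D} (f : Hm A B) (g : Hm B D) : rst g ∘ f = f ∘ rst (g ∘ f). Proof. exact (R4 HC f g). Qed.
Lemma rT {A B D E} (f : Hm A B) (g : Hm D E) : rst (f ⊗ g) = rst f ⊗ rst g. Proof. exact (rst_tenm HC f g). Qed.

Lemma rst_id A : rst (ι A) = ι A.
Proof. rewrite <- (c1l (rst (ι A))). apply rR1. Qed.
Lemma La {A B D} (g : Hm B D) (f : Hm A B) : rst (g ∘ f) = rst (g ∘ f) ∘ rst f.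
Proof. rewrite <- (rR1 f) at 1. rewrite cA. apply rR3. Qed.
Lemma Lb {A B D} (x : Hm B D) (f : Hm A B) : rst (x ∘ f) = rst (rst x ∘ f).
Proof. rewrite rR4, rR3, rR2, <- La. reflexivity. Qed.
Lemma Ltot {A B D} (g : Hm B D) (f : Hm A B) : rst g = ι _ -> rst (g ∘ f) = rst f.
Proof. intro H. rewrite Lb, H, c1l. reflexivity. Qed.
Lemma Liso {A B} (i : Hm A B) (j : Hm B A) : j ∘ i = ι _ -> rst i = ι _.
Proof. intro H. rewrite <- (c1l (rst i)), <- (rst_id A), <- H, <- La. reflexivity. Qed.
Lemma tot_cmp {A B D} (g : Hm B D) (f : Hm A B) : rst g = ι _ -> rst f = ι _ -> rst (g ∘ f) = ι _.
Proof. intros H1 H2. rewrite Ltot; assumption. Qed.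
Lemma tot_ten {A B D E} (f : Hm A B) (g : Hm D E) : rst f = ι _ -> rst g = ι _ -> rst (f ⊗ g) = ι _.
Proof. intros H1 H2. rewrite rT, H1, H2, t11. reflexivity. Qed.
Lemma Lfix {A B D} (x : Hm B D) (f : Hm A B) : rst (x ∘ f) = rst f -> rst x ∘ f = f.
Proof. intro H. rewrite rR4, H, rR1. reflexivity. Qed.

Ltac tot := repeat first [ apply tot_cmp | apply tot_ten | apply rst_id
  | apply (Liso _ (asci _ _ _)); apply a'a | apply (Liso _ (asc _ _ _)); apply aa'
  | apply (Liso _ (lui _)); apply l'l | apply (Liso _ (lu _)); apply ll'
  | apply (Liso _ (rui _)); apply r'r | apply (Liso _ (ru _)); apply rr'
  | apply (Liso _ (sym _ _)); apply ss | rewrite thE ].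

Lemma tot_test B E B' E' : rst (th B E B' E') = ι _.
Proof. tot. Qed.

Local Notation aH := (@auxHom C).
Local Notation sim := (@aux_sim C _ _).

Lemma tri_tot {A B E E'} (f : Hm A (ten B E)) (f' : Hm A (ten B E')) (h : Hm E E') :
  rst h = ι _ -> (ι B ⊗ h) ∘ f = f' -> sim (existT _ E f) (existT _ E' f').
Proof.
  intros Hh Hf. apply rst_step. split; simpl.
  - rewrite <- Hf, Ltot; [reflexivity|]. apply tot_ten; [apply rst_id | exact Hh].
  - exists h. exact Hf.
Qed.
Lemma tri_tot' {A B E E'} (f : Hm A (ten B E)) (f' : Hm A (ten B E')) (h : Hm E' E) :
  rst h = ι _ -> (ι B ⊗ h) ∘ f' = f -> sim (existT _ E f) (existT _ E' f').
Proof. intros Hh Hf. apply rst_sym. apply (tri_tot _ _ h Hh Hf). Qed.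


Instance aux_sim_equiv A B : Equivalence (@aux_sim C A B).
Proof.
  destruct (clos_rst_is_equiv (auxHom A B) (@aux_tri C A B)) as [H1 H2 H3].
  split; [exact H1 | exact H3 | exact H2].
Qed.

Lemma lift_cong {X Y : Type} {R : relation X} (S : relation Y) {HS : Equivalence S} (F : X -> Y) :
  (forall a b, R a b -> S (F a) (F b)) -> forall a b, clos_refl_sym_trans X R a b -> S (F a) (F b).
Proof.
  intros HF a b Hab. induction Hab.
  - apply HF; assumption.
  - reflexivity.
  - symmetry; assumption.
  - etransitivity; eassumption.
Qed.

Lemma tcl {A B D A' B'} (x : Hm B D) (f : Hm A B) (g : Hm A' B') : (x ∘ f) ⊗ g = (x ⊗ ι B') ∘ (f ⊗ g).
Proof. rewrite <- tc, c1l. reflexivity. Qed.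
Lemma tcr {A B D A' B'} (f : Hm A B) (y : Hm B' D) (g : Hm A' B') : f ⊗ (y ∘ g) = (ι B ⊗ y) ∘ (f ⊗ g).
Proof. rewrite <- tc, c1l. reflexivity. Qed.

Lemma thnE {B E E' B' F} (h : Hm E E') : th B E' B' F ∘ ((ι B ⊗ h) ⊗ ι (ten B' F)) = (ι (ten B B') ⊗ (h ⊗ ι F)) ∘ th B E B' F.
Proof.
  pose proof (thn (ι B) h (ι B') (ι F)) as H. rewrite !t11 in H. exact H.
Qed.
Lemma thnE' {B E B' F F'} (h : Hm F F') : th B E B' F' ∘ (ι (ten B E) ⊗ (ι B' ⊗ h)) = (ι (ten B B') ⊗ (ι E ⊗ h)) ∘ th B E B' F.
Proof.
  pose proof (thn (ι B) (ι E) (ι B') h) as H. rewrite !t11 in H. exact H.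
Qed.

Lemma cmp_proper_l {A B D} (p : aH A B) (q q' : aH B D) : aux_tri q q' -> sim (aux_cmp q p) (aux_cmp q' p).
Proof.
  destruct p as [E f], q as [F g], q' as [F' g']. intros [Hr [h Hh]]. simpl in *.
  apply rst_step. split; simpl.
  - rewrite (Ltot (asc _ _ _)) by tot. rewrite (Ltot (asc _ _ _)) by tot. rewrite (Lb (g ⊗ ι E)), (Lb (g' ⊗ ι E)), !rT, Hr. reflexivity.
  - exists (h ⊗ ι E). rewrite <- Hh. apply kify; intros X k. nf. rwr (anm h). reflexivity.
Qed.
Lemma cmp_proper_r {A B D} (p p' : aH A B) (q : aH B D) : aux_tri p p' -> sim (aux_cmp q p) (aux_cmp q p').
Proof.
  destruct p as [E f], p' as [E' f'], q as [F g]. intros [Hr [h Hh]]. simpl in *.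
  apply rst_step. split; simpl.
  - rewrite (Ltot (asc _ _ _)) by tot. rewrite (Ltot (asc _ _ _)) by tot. rewrite <- Hh.
    rewrite (Lb (g ⊗ ι E)), (Lb (g ⊗ ι E')), !rT, !rst_id.
    assert (Hfix : (ι B ⊗ rst h) ∘ f = f).
    { rewrite <- (rst_id B), <- rT. apply Lfix. rewrite Hh. symmetry. exact Hr. }
    rewrite (cA (rst g ⊗ ι E') (ι B ⊗ h) f), <- (tcomm0 (rst g) h), <- cA, (Lb (ι B ⊗ h)), (rT (ι B) h), (rst_id B).
    rewrite (cA (ι B ⊗ rst h)), tcomm0, <- cA, Hfix. reflexivity.
  - exists (ι F ⊗ h). rewrite <- Hh. apply kify; intros X k. nf. rwr (anr h). rw (tcomm0 g h). reflexivity.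
Qed.

Instance aux_cmp_proper A B D : Proper (@aux_sim C _ _ ==> @aux_sim C _ _ ==> @aux_sim C _ _) (@aux_cmp C A B D).
Proof.
  intros q q' Hq p p' Hp. transitivity (aux_cmp q' p).
  - apply (lift_cong (R := @aux_tri C _ _) (@aux_sim C _ _) (fun x => aux_cmp x p)); [|exact Hq]. intros; apply cmp_proper_l; assumption.
  - apply (lift_cong (R := @aux_tri C _ _) (@aux_sim C _ _) (fun x => aux_cmp q' x)); [|exact Hp]. intros; apply cmp_proper_r; assumption.
Qed.

Lemma tenm_proper_l {A B A' B'} (p p' : aH A B) (q : aH A' B') : aux_tri p p' -> sim (aux_tenm p q) (aux_tenm p' q).
Proof.
  destruct p as [E f], p' as [E' f'], q as [F g]. intros [Hr [h Hh]]. simpl in *.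
  apply rst_step. split; simpl.
  - rewrite (Ltot (th _ _ _ _)) by tot. rewrite (Ltot (th _ _ _ _)) by tot. rewrite !rT, Hr. reflexivity.
  - exists (h ⊗ ι F). rewrite <- Hh, tcl. ra. rw (thnE h). reflexivity.
Qed.
Lemma tenm_proper_r {A B A' B'} (p : aH A B) (q q' : aH A' B') : aux_tri q q' -> sim (aux_tenm p q) (aux_tenm p q').
Proof.
  destruct q as [E f], q' as [E' f'], p as [F g]. intros [Hr [h Hh]]. simpl in *.
  apply rst_step. split; simpl.
  - rewrite (Ltot (th _ _ _ _)) by tot. rewrite (Ltot (th _ _ _ _)) by tot. rewrite !rT, Hr. reflexivity.
  - exists (ι F ⊗ h). rewrite <- Hh, tcr. ra. rw (thnE' h). reflexivity.
Qed.

Instance aux_tenm_proper A B A' B' : Proper (@aux_sim C _ _ ==> @aux_sim C _ _ ==> @aux_sim C _ _) (@aux_tenm C A B A' B').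
Proof.
  intros p p' Hp q q' Hq. transitivity (aux_tenm p' q).
  - apply (lift_cong (R := @aux_tri C _ _) (@aux_sim C _ _) (fun x => aux_tenm x q)); [|exact Hp]. intros; apply tenm_proper_l; assumption.
  - apply (lift_cong (R := @aux_tri C _ _) (@aux_sim C _ _) (fun x => aux_tenm p' x)); [|exact Hq]. intros; apply tenm_proper_r; assumption.
Qed.

Instance aux_rst_proper A B : Proper (@aux_sim C _ _ ==> @aux_sim C _ _) (@aux_rst C A B).
Proof.
  intros p p' Hp. apply (lift_cong (R := @aux_tri C _ _) (@aux_sim C _ _) (@aux_rst C A B)); [|exact Hp].
  intros [E f] [E' f'] [Hr _]. simpl in *. unfold aux_rst. simpl. rewrite Hr. reflexivity.
Qed.


Lemma T0 B E : (ι B ⊗ lu E) ∘ asc B unt E ∘ (rui B ⊗ ι E) = ι _.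
Proof. rw (tri B E). cancel. reflexivity. Qed.

Lemma G2 A : aux_id A = aux_of (ι A).
Proof. unfold aux_id, aux_of. rewrite c1r. reflexivity. Qed.

Lemma of_eq {A B} (a b : Hm A B) : a = b -> sim (aux_of a) (aux_of b).
Proof. intros ->. reflexivity. Qed.

Lemma ofcmp {A B D} (a : Hm B D) (b : Hm A B) : sim (aux_cmp (aux_of a) (aux_of b)) (aux_of (a ∘ b)).
Proof.
  unfold aux_cmp, aux_of; simpl. apply (tri_tot _ _ (lu unt)); [tot|].
  apply kify; intros X k. nf. rw (T0 D unt). rwr (r'n a). reflexivity.
Qed.

Lemma oftenm {A B A' B'} (a : Hm A B) (b : Hm A' B') : sim (aux_tenm (aux_of a) (aux_of b)) (aux_of (a ⊗ b)).
Proof.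
  unfold aux_tenm, aux_of; simpl. apply (tri_tot _ _ (lu unt)); [tot|].
  rewrite tc. ra. rw (K2 B B'). reflexivity.
Qed.

Lemma ofl {A B B'} (a : Hm B B') (p : aH A B) : sim (aux_cmp (aux_of a) p) (existT _ (projT1 p) ((a ⊗ ι _) ∘ projT2 p)).
Proof.
  destruct p as [E f]. unfold aux_cmp, aux_of; simpl. apply (tri_tot _ _ (lu E)); [tot|].
  apply kify; intros X k. nf. rw (T0 B' E). reflexivity.
Qed.

Lemma ofr {A A' B} (p : aH A' B) (a : Hm A A') : sim (aux_cmp p (aux_of a)) (existT _ (projT1 p) (projT2 p ∘ a)).
Proof.
  destruct p as [E f]. unfold aux_cmp, aux_of; simpl. apply (tri_tot _ _ (ru E)); [tot|].
  apply kify; intros X k. nf. rw (kelly_r B E). rw (rn f). cancel. reflexivity.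
Qed.

Lemma AX_cmpA {A B D E} (h : aH D E) (g : aH B D) (f : aH A B) :
  sim (aux_cmp h (aux_cmp g f)) (aux_cmp (aux_cmp h g) f).
Proof.
  destruct h as [E3 h], g as [E2 g], f as [E1 f]. unfold aux_cmp; simpl.
  apply (tri_tot' _ _ (asc E3 E2 E1)); [tot|].
  apply kify; intros X k. nf. rwr (anl h). rw (pent E E3 E2 E1). reflexivity.
Qed.

Lemma AX_cmp1l {A B} (f : aH A B) : sim (aux_cmp (aux_id B) f) f.
Proof. rewrite G2, ofl. destruct f as [E f]; simpl. rewrite t11, c1l. reflexivity. Qed.
Lemma AX_cmp1r {A B} (f : aH A B) : sim (aux_cmp f (aux_id A)) f.
Proof. rewrite G2, ofr. destruct f as [E f]; simpl. rewrite c1r. reflexivity. Qed.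

Lemma rst_of {A B} (p : aH A B) : aux_rst p = aux_of (rst (projT2 p)).
Proof. reflexivity. Qed.

Lemma AX_R1 {A B} (f : aH A B) : sim (aux_cmp f (aux_rst f)) f.
Proof. rewrite rst_of, ofr. destruct f as [E f]; simpl. rewrite rR1. reflexivity. Qed.
Lemma AX_R2 {A B D} (f : aH A B) (g : aH A D) : sim (aux_cmp (aux_rst f) (aux_rst g)) (aux_cmp (aux_rst g) (aux_rst f)).
Proof. rewrite !rst_of, !ofcmp. apply of_eq. apply rR2. Qed.
Lemma AX_R3 {A B D} (f : aH A B) (g : aH A D) : sim (aux_rst (aux_cmp g (aux_rst f))) (aux_cmp (aux_rst g) (aux_rst f)).
Proof.
  rewrite (rst_of g), (rst_of f), ofcmp. rewrite rst_of. apply of_eq.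
  destruct f as [E1 f], g as [E2 g]; simpl.
  rewrite (Ltot (asc _ _ _)) by tot. rewrite (cA (g ⊗ ι unt)), <- r'n, <- cA, (Ltot (rui _)) by tot. apply rR3.
Qed.
Lemma AX_R4 {A B D} (f : aH A B) (g : aH B D) : sim (aux_cmp (aux_rst g) f) (aux_cmp f (aux_rst (aux_cmp g f))).
Proof.
  rewrite !rst_of, ofl, ofr. destruct f as [E1 f], g as [E2 g]; simpl.
  rewrite (Ltot (asc _ _ _)) by tot.
  replace (rst g ⊗ ι E1) with (rst (g ⊗ ι E1)) by (rewrite rT, rst_id; reflexivity). rewrite rR4. reflexivity.
Qed.

Lemma AX_tenm_cmp {A B D A' B' D'} (f : aH A B) (g : aH B D) (f' : aH A' B') (g' : aH B' D') :
  sim (aux_tenm (aux_cmp g f) (aux_cmp g' f')) (aux_cmp (aux_tenm g g') (aux_tenm f f')).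
Proof.
  destruct f as [E f], g as [F g], f' as [E' f'], g' as [F' g']. unfold aux_tenm, aux_cmp; simpl.
  apply (tri_tot _ _ (th F E F' E')); [tot|].
  rewrite !tc. apply kify; intros X k. ra. rw (K4 D F E D' F' E').
  pose proof (thn g (ι E) g' (ι E')) as H. rewrite t11 in H. nf. rw H. reflexivity.
Qed.

Lemma AX_tenm_id A B : sim (aux_tenm (aux_id A) (aux_id B)) (aux_id (ten A B)).
Proof. rewrite !G2, oftenm, t11. reflexivity. Qed.

Lemma AX_iso {A B} (a : Hm A B) (b : Hm B A) : a ∘ b = ι _ -> sim (aux_cmp (aux_of a) (aux_of b)) (aux_id _).
Proof. intro H. rewrite ofcmp, H, G2. reflexivity. Qed.

Lemma AX_asc_nat {A A' B B' D D'} (f : aH A A') (g : aH B B') (h : aH D D') :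
  sim (aux_cmp (aux_of (asc A' B' D')) (aux_tenm (aux_tenm f g) h))
      (aux_cmp (aux_tenm f (aux_tenm g h)) (aux_of (asc A B D))).
Proof.
  rewrite ofl, ofr. destruct f as [E f], g as [F g], h as [G h]. unfold aux_tenm; simpl.
  apply (tri_tot _ _ (asc E F G)); [tot|].
  rewrite tcl, tcr. apply kify; intros X k. nf. rw (K5 A' B' D' E F G). rw (an f g h). reflexivity.
Qed.

Lemma AX_lu_nat {A B} (f : aH A B) :
  sim (aux_cmp (aux_of (lu B)) (aux_tenm (aux_id unt) f)) (aux_cmp f (aux_of (lu A))).
Proof.
  rewrite ofl, ofr. destruct f as [E f]. unfold aux_tenm, aux_id; simpl.
  apply (tri_tot _ _ (lu E)); [tot|].
  rewrite (tx (rui unt)). apply kify; intros X k. nf. rw (K6 B E). rw (ln f). reflexivity.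
Qed.

Lemma AX_ru_nat {A B} (f : aH A B) :
  sim (aux_cmp (aux_of (ru B)) (aux_tenm f (aux_id unt))) (aux_cmp f (aux_of (ru A))).
Proof.
  rewrite ofl, ofr. destruct f as [E f]. unfold aux_tenm, aux_id; simpl.
  apply (tri_tot _ _ (ru E)); [tot|].
  rewrite (tx' f). apply kify; intros X k. nf. rw (K7 B E). rw (rn f). reflexivity.
Qed.

Lemma AX_sym_nat {A A' B B'} (f : aH A A') (g : aH B B') :
  sim (aux_cmp (aux_of (sym A' B')) (aux_tenm f g)) (aux_cmp (aux_tenm g f) (aux_of (sym A B))).
Proof.
  rewrite ofl, ofr. destruct f as [E f], g as [F g]. unfold aux_tenm; simpl.
  apply (tri_tot _ _ (sym E F)); [tot|].
  apply kify; intros X k. nf. rw (K8 A' E B' F). rw (sn f g). reflexivity.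
Qed.

Lemma AX_rst_tenm {A B D E} (f : aH A B) (g : aH D E) :
  sim (aux_rst (aux_tenm f g)) (aux_tenm (aux_rst f) (aux_rst g)).
Proof.
  rewrite !rst_of, oftenm. apply of_eq. destruct f as [E1 f], g as [E2 g]; simpl.
  rewrite (Ltot (th _ _ _ _)) by tot. apply rT.
Qed.


Lemma AX_pent A B D E :
  sim (aux_cmp (aux_of (asc A B (ten D E))) (aux_of (asc (ten A B) D E)))
      (aux_cmp (aux_tenm (aux_id A) (aux_of (asc B D E)))
         (aux_cmp (aux_of (asc A (ten B D) E)) (aux_tenm (aux_of (asc A B D)) (aux_id E)))).
Proof. rewrite !G2, !oftenm, !ofcmp. apply of_eq. apply pent. Qed.

Lemma AX_tri A B :
  sim (aux_cmp (aux_tenm (aux_id A) (aux_of (lu B))) (aux_of (asc A unt B))) (aux_tenm (aux_of (ru A)) (aux_id B)).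
Proof. rewrite !G2, !oftenm, !ofcmp. apply of_eq. apply tri. Qed.

Lemma AX_hex A B D :
  sim (aux_cmp (aux_tenm (aux_id B) (aux_of (sym A D))) (aux_cmp (aux_of (asc B A D)) (aux_tenm (aux_of (sym A B)) (aux_id D))))
      (aux_cmp (aux_of (asc B D A)) (aux_cmp (aux_of (sym A (ten B D))) (aux_of (asc A B D)))).
Proof. rewrite !G2, !oftenm, !ofcmp. apply of_eq. apply hex. Qed.

Lemma main : @is_smrc (Aux_data C) (@aux_sim C).
Proof.
  constructor.
  - intros A B. apply clos_rst_is_equiv.
  - intros A B D g g' f f' Hg Hf. apply aux_cmp_proper; assumption.
  - intros A B f f' Hf. apply aux_rst_proper; assumption.
  - intros A B D E f f' g g' Hf Hg. apply aux_tenm_proper; assumption.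
  - intros. apply AX_cmpA.
  - intros. apply AX_cmp1l.
  - intros. apply AX_cmp1r.
  - intros. apply AX_R1.
  - intros. apply AX_R2.
  - intros. apply AX_R3.
  - intros. apply AX_R4.
  - intros. apply AX_tenm_cmp.
  - intros. apply AX_tenm_id.
  - intros. apply AX_iso. apply aa'.
  - intros. apply AX_iso. apply a'a.
  - intros. apply AX_iso. apply ll'.
  - intros. apply AX_iso. apply l'l.
  - intros. apply AX_iso. apply rr'.
  - intros. apply AX_iso. apply r'r.
  - intros. apply AX_iso. apply ss.
  - intros. apply AX_asc_nat.
  - intros. apply AX_lu_nat.
  - intros. apply AX_ru_nat.
  - intros. apply AX_sym_nat.
  - intros. apply AX_pent.
  - intros. apply AX_tri.
  - intros. apply AX_hex.
  - intros. apply AX_rst_tenm.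
Qed.

End Basic.

Theorem proposition3p7 (C : smr_data) (HC : SMRC C) :
  @is_smrc (Aux_data C) (@aux_sim C).
Proof. exact (main C HC). Qed.
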